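(* Let $m,n$ be integers of opposite parity, and let $M'_1=2m-n$, $N'_1=m+2n$, $v=(M'_1,N'_1)$, $w=(-N'_1,M'_1)$ and $c=(v+w)/2$. For $k=1,2,3,4$ let $G'_2(k)$ be the group of plane isometries generated by the translations in the lattice $L_k$ and the quarter turn about $c$, where $L_1=\mathbb{Z}v+\mathbb{Z}w$, $L_2=\mathbb{Z}(v+w)+\mathbb{Z}(v-w)$, $L_3=2L_1$, $L_4=2L_2$. Let $G_2$ be the isometry group of the $(5,3)$ satin with $M_1=2$, $N_1=1$, namely the group generated by the translations in the lattice $\mathbb{Z}(2,1)+\mathbb{Z}(-1,2)$ and the quarter turn about the origin. Then $G'_2(k)$ is a subgroup of $G_2$ for each $k=1,2,3,4$.
   Context: The groups are the isometry groups (type $p4$) attached to square lattice units: a level-1 lattice unit is the square with corners $0$, $v$, $v+w$, $w$ (quarter-turn centres at corners and centre, half-turn centres at mid-sides); the level-2 unit is the square with the same centre escribing it (side vectors $v+w$, $v-w$); levels 3 and 4 are the level-1 and level-2 units doubled in size about the same centre. The level-1 unit of the $(5,3)$ satin's isometry group is the square on side vectors $(2,1)$ and $(-1,2)$ with a corner at the origin, and the larger lattice unit based on $(M'_1,N'_1)$ is placed with its first corner at the origin, a corner of the satin's lattice units. *)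

(* Defs.v *)
From Stdlib Require Import Reals ZArith.
Open Scope R_scope.

Definition pt := (R * R)%type.

Definition vadd (p q : pt) : pt := (fst p + fst q, snd p + snd q).
Definition vsub (p q : pt) : pt := (fst p - fst q, snd p - snd q).
Definition vscale (a : R) (p : pt) : pt := (a * fst p, a * snd p).

Definition translation (t : pt) : pt -> pt := fun p => vadd p t.

Definition rot90 (p : pt) : pt := (- snd p, fst p).
Definition quarter_turn (c : pt) : pt -> pt :=
  fun p => vadd c (rot90 (vsub p c)).

Definition lattice (u1 u2 : pt) : pt -> Prop :=
  fun t => exists a b : Z, t = vadd (vscale (IZR a) u1) (vscale (IZR b) u2).

Inductive generated (S : (pt -> pt) -> Prop) : (pt -> pt) -> Prop :=
| gen_base f : S f -> generated S f
| gen_id : generated S (fun p => p)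
| gen_comp f g : generated S f -> generated S g ->
    generated S (fun p => f (g p))
| gen_inv f g : generated S f ->
    (forall p, g (f p) = p) -> (forall p, f (g p) = p) -> generated S g.

Definition trans_rot_group (L : pt -> Prop) (c : pt) : (pt -> pt) -> Prop :=
  generated (fun f => (exists t, L t /\ f = translation t) \/ f = quarter_turn c).

Definition M1' (m n : Z) : Z := (2 * m - n)%Z.
Definition N1' (m n : Z) : Z := (m + 2 * n)%Z.
Definition vv (m n : Z) : pt := (IZR (M1' m n), IZR (N1' m n)).
Definition ww (m n : Z) : pt := (- IZR (N1' m n), IZR (M1' m n)).
Definition cc (m n : Z) : pt := vscale (/ 2) (vadd (vv m n) (ww m n)).

Definition Lk (m n : Z) (k : nat) : pt -> Prop :=
  let v := vv m n in let w := ww m n in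
  match k with
  | 1%nat => lattice v w
  | 2%nat => lattice (vadd v w) (vsub v w)
  | 3%nat => lattice (vscale 2 v) (vscale 2 w)
  | _ => lattice (vscale 2 (vadd v w)) (vscale 2 (vsub v w))
  end.

Definition G2' (m n : Z) (k : nat) : (pt -> pt) -> Prop :=
  trans_rot_group (Lk m n k) (cc m n).

Definition G2 : (pt -> pt) -> Prop :=
  trans_rot_group (lattice (2, 1) (-1, 2)) (0, 0).

(* Main.v *)
Require Import Defs.
From Stdlib Require Import Reals ZArith Lra FunctionalExtensionality.
Open Scope R_scope.

Definition LL := lattice (2, 1) (-1, 2).

Lemma L_eq (x y : pt) : x = y -> LL x -> LL y.
Proof. intros ->; auto. Qed.

Lemma L_add x y : LL x -> LL y -> LL (vadd x y).
Proof.
  intros [a [b Ha]] [c [d Hc]]. exists (a + c)%Z, (b + d)%Z.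
  subst. unfold vadd, vscale; simpl. rewrite !plus_IZR. f_equal; ring.
Qed.

Lemma L_scale z x : LL x -> LL (vscale (IZR z) x).
Proof.
  intros [a [b Ha]]. exists (z * a)%Z, (z * b)%Z.
  subst. unfold vadd, vscale; simpl. rewrite !mult_IZR. f_equal; ring.
Qed.

Lemma L_comb x y (a b : Z) : LL x -> LL y -> LL (vadd (vscale (IZR a) x) (vscale (IZR b) y)).
Proof. intros; apply L_add; apply L_scale; auto. Qed.

Lemma L_sub x y : LL x -> LL y -> LL (vsub x y).
Proof.
  intros Hx Hy. apply (L_eq (vadd (vscale (IZR 1) x) (vscale (IZR (-1)) y))).
  - destruct x, y; unfold vadd, vsub, vscale; simpl; f_equal; ring.
  - apply L_comb; auto.
Qed.

Lemma L_two x : LL x -> LL (vscale 2 x).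
Proof. intros; apply (L_scale 2); auto. Qed.

Lemma L_v m n : LL (vv m n).
Proof.
  exists m, n. unfold vv, M1', N1', vadd, vscale; cbv [fst snd].
  rewrite ?minus_IZR, ?plus_IZR, ?mult_IZR, ?opp_IZR. f_equal; ring.
Qed.

Lemma L_w m n : LL (ww m n).
Proof.
  exists (- n)%Z, m. unfold ww, M1', N1', vadd, vscale; cbv [fst snd].
  rewrite ?minus_IZR, ?plus_IZR, ?mult_IZR, ?opp_IZR. f_equal; ring.
Qed.

Lemma Lk_sub m n k t : Lk m n k t -> LL t.
Proof.
  assert (Hv := L_v m n); assert (Hw := L_w m n).
  destruct k as [|[|[|[|k]]]]; simpl; intros [a [b ->]]; apply L_comb;
  repeat first [apply L_two | apply L_add | apply L_sub | assumption].
Qed.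

Lemma qt_eq m n : quarter_turn (cc m n) = fun p => translation (vv m n) (quarter_turn (0, 0) p).
Proof.
  apply functional_extensionality; intros [x y].
  unfold quarter_turn, translation, cc, vv, ww, vadd, vsub, vscale, rot90; simpl.
  f_equal; field.
Qed.

Theorem theorem3 (m n : Z) (hpar : Z.odd m <> Z.odd n) (k : nat)
  (hk : (1 <= k <= 4)%nat) :
  forall f : pt -> pt, G2' m n k f -> G2 f.
Proof.
  intros f H. induction H.
  - destruct H as [[t [Ht ->]] | ->].
    + apply gen_base. left. exists t; split; auto. eapply Lk_sub; eauto.
    + rewrite qt_eq. apply (gen_comp _ (translation (vv m n)) (quarter_turn (0,0))).
      * apply gen_base; left; exists (vv m n); split; auto; apply L_v.
      * apply gen_base; right; reflexivity.
  - apply gen_id.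
  - apply gen_comp; auto.
  - eapply gen_inv; eauto.
Qed.
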